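(* Let $A$ be a finite alphabet and let $L$ be a circular language over $A$ (a set of circular words). The following conditions are equivalent: (1) There exists a $(1,3)$-complete circular splicing system $S=(A,I,R)$, with $I$ a finite set of nonempty circular words, such that $L=L(S)$. (2) There exists a flat splicing system $\mathcal{S}=(A,Y,R')$, where $Y\subseteq A^+$ is a finite language closed under the conjugacy relation and $R'=\{\langle a\mid 1 - 1\mid b\rangle : a,b\in A\}$, such that $L(\mathcal{S})=Lin(L)$. (3) There exists a finite language $Y\subseteq A^+$, closed under the conjugacy relation, such that $Lin(L)=Y^{\leftarrow_*}\setminus\{1\}$.
   Context: $1$ denotes the empty word, $A^+=A^*\setminus\{1\}$. Conjugacy: $xy\sim yx$ for $x,y\in A^*$; a circular word $\sim w$ is the conjugacy class of $w$; for a set $L$ of circular words, $Lin(L)=\{w\in A^*:\ \sim w\in L\}$ (full linearization); for $Y\subseteq A^*$, $\sim Y=\{\sim w: w\in Y\}$. A $(1,3)$-complete system $S=(A,I,R)$: $I$ is a finite set of circular words and the set of rules is $R=\{a\#1\$b\#1 : a,b\in A\}$ (all pairs of letters). Circular splicing with rule $a\#1\$b\#1$: from circular words $\sim xa$ and $\sim yb$ (for some words $x,y$) it produces $\sim xayb$. $L(S)$ is the smallest set of circular words containing $I$ and closed under applying rules of $R$ to any two (not necessarily distinct) of its elements. Flat splicing system $\mathcal{S}=(A,Y,R')$: $Y\subseteq A^*$, $R'$ a finite set of rules $\langle\alpha\mid\beta-\gamma\mid\delta\rangle$ with $\alpha,\beta,\gamma,\delta\in A^*$; applying such a rule to $u=x\alpha\beta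 y$ and $v=\gamma z\delta$ yields $x\alpha\gamma z\delta\beta y$. In particular $\langle a\mid 1-1\mid b\rangle$ applied to $u=xay$ and $v=zb$ yields $xazby$. $L(\mathcal{S})$ is the smallest language containing $Y$ and closed under applying rules of $R'$. Iterated insertion: for $Z,Y\subseteq A^*$, $Z\leftarrow Y=\{z_1yz_2: z_1z_2\in Z, y\in Y\}$; $Y^{\leftarrow_0}=\{1\}$, $Y^{\leftarrow_{i+1}}=Y^{\leftarrow_i}\leftarrow Y$, $Y^{\leftarrow_*}=\bigcup_{i\ge0}Y^{\leftarrow_i}$. *)

(* Defs.v *)
From HB Require Import structures.
From mathcomp Require Import all_boot.
Set Implicit Arguments. Unset Strict Implicit. Unset Printing Implicit Defensive.

Section Words.
Variable A : finType.
Local Notation word := (seq A).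

(* Note [rot i x] is by definition [drop i x ++ take i x],
   and every factorisation x = u v is of this form with i = size u <= size x. *)
Definition conjb (x y : word) : bool :=
  [exists i : 'I_(size x).+1, y == drop i x ++ take i x].

Lemma conjb_refl x : conjb x x.
Proof. by apply/existsP; exists ord0; rewrite drop0 take0 cats0. Qed.

Lemma conjbP x y : reflect (exists2 i, i <= size x & y = rot i x) (conjb x y).
Proof.
apply: (iffP existsP) => [[i /eqP ->]|[i Hi ->]].
  by exists i; [rewrite -ltnS ltn_ord | ].
have Hi' : i < (size x).+1 by []. by exists (Ordinal Hi').
Qed.

Lemma conjb_sym x y : conjb x y -> conjb y x.
Proof.
move/conjbP=> [i Hi ->]; apply/conjbP; exists (size x - i).
  by rewrite size_rot leq_subr.
by rewrite -{1}(rotK i x) /rotr size_rot.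
Qed.

Lemma conjb_trans x y z : conjb x y -> conjb y z -> conjb x z.
Proof.
move=> /conjbP[i Hi ->] /conjbP[j]; rewrite size_rot => Hj ->.
apply/conjbP; rewrite rot_add_mod //.
eexists; last reflexivity.
by case: (leqP (j + i) (size x)) => // _; rewrite leq_subLR leq_add.

Qed.

Definition crep (w : word) : word := choose (conjb w) w.

Lemma conjb_crep w : conjb w (crep w).
Proof. exact: chooseP (conjb_refl w). Qed.

Lemma crep_conj w w' : conjb w w' -> crep w' = crep w.
Proof.
move=> H; rewrite /crep.
have E : conjb w' =1 conjb w.
  move=> v; apply/idP/idP => Hv.
    exact: conjb_trans H Hv.
  exact: conjb_trans (conjb_sym H) Hv.
rewrite (eq_choose E); apply: choose_id => //; exact: conjb_refl.
Qed.

Lemma crep_idem w : crep (crep w) == crep w.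
Proof. by rewrite (crep_conj (conjb_crep w)). Qed.

(* Circular words: conjugacy classes, represented by their canonical element *)
Definition circ : Type := {w : word | crep w == w}.
HB.instance Definition _ := Equality.copy circ {w : word | crep w == w}.

Definition cw (w : word) : circ := exist _ (crep w) (crep_idem w).

Definition Lin (L : circ -> Prop) : word -> Prop := fun w => L (cw w).

(* L(S) for the (1,3)-complete circular splicing system S = (A, I, R),
   R = { a#1$b#1 : a, b in A }:  from ~xa and ~yb one gets ~xayb. *)
Inductive circ13 (I : seq circ) : circ -> Prop :=
| circ13_init c : c \in I -> circ13 I c
| circ13_step (x y : word) (a b : A) :
    circ13 I (cw (rcons x a)) -> circ13 I (cw (rcons y b)) ->
    circ13 I (cw (x ++ a :: y ++ [:: b])).

Definition frule : Type := (word * word * word * word)%type.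
Definition f_alpha (r : frule) : word := r.1.1.1.
Definition f_beta (r : frule) : word := r.1.1.2.
Definition f_gamma (r : frule) : word := r.1.2.
Definition f_delta (r : frule) : word := r.2.

Inductive flatL (Y : word -> Prop) (R : seq frule) : word -> Prop :=
| flatL_init w : Y w -> flatL Y R w
| flatL_step (r : frule) (x y z : word) :
    r \in R ->
    flatL Y R (x ++ f_alpha r ++ f_beta r ++ y) ->
    flatL Y R (f_gamma r ++ z ++ f_delta r) ->
    flatL Y R (x ++ f_alpha r ++ f_gamma r ++ z ++ f_delta r ++ f_beta r ++ y).

Definition Rflat : seq frule :=
  [seq ([:: p.1], [::], [::], [:: p.2]) : frule | p <- enum {: A * A}].

Definition insertion (Z Y : word -> Prop) : word -> Prop :=
  fun w => exists z1 z2 y, Z (z1 ++ z2) /\ Y y /\ w = z1 ++ y ++ z2.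

Fixpoint iter_ins (Y : word -> Prop) (n : nat) : word -> Prop :=
  match n with
  | 0 => fun w => w = [::]
  | n'.+1 => insertion (iter_ins Y n') Y
  end.

Definition ins_star (Y : word -> Prop) : word -> Prop :=
  fun w => exists n, iter_ins Y n w.

Definition conj_closed (Y : seq word) : Prop :=
  forall x y, x \in Y -> conjb x y -> y \in Y.

End Words.

(* Main.v *)
Require Import Defs.
From HB Require Import structures.
From mathcomp Require Import all_boot.

Set Implicit Arguments. Unset Strict Implicit. Unset Printing Implicit Defensive.

Section Proof.
Variable A : finType.
Local Notation word := (seq A).

Lemma cw_conj (u v : word) : conjb u v -> cw u = cw v.
Proof.
move=> H; apply: val_inj => /=; exact: (esym (crep_conj H)).
Qed.

Lemma cw_eq_conj (u v : word) : cw u = cw v -> conjb u v.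
Proof.
move=> H; have E : crep u = crep v by have := congr1 val H.
apply: conjb_trans (conjb_crep u) _; rewrite E; apply: conjb_sym; exact: conjb_crep.
Qed.

Lemma cw_val (c : circ A) : cw (val c) = c.
Proof. apply: val_inj => /=; exact: (eqP (valP c)). Qed.

Lemma conjb_size (u v : word) : conjb u v -> size v = size u.
Proof. by move/conjbP=> [i _ ->]; rewrite size_rot. Qed.

Variable Y : seq word.
Hypothesis Yne : forall w, w \in Y -> w != [::].
Hypothesis Ycc : conj_closed Y.
Local Notation P := (fun u : word => u \in Y).

Lemma ins_nil : ins_star P [::].
Proof. by exists 0. Qed.

Lemma ins_Y y : y \in Y -> ins_star P y.
Proof. move=> Hy; exists 1, [::], [::], y; by rewrite /= cats0. Qed.

Lemma ins_insert u1 u2 y : ins_star P (u1 ++ u2) -> y \in Y ->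
  ins_star P (u1 ++ y ++ u2).
Proof. by move=> [n Hn] Hy; exists n.+1, u1, u2, y. Qed.

Lemma ins_comp_n n v : iter_ins P n v -> forall u1 u2,
  ins_star P (u1 ++ u2) -> ins_star P (u1 ++ v ++ u2).
Proof.
elim: n v => [|n IH] v /=; first by move=> -> u1 u2.
move=> [z1 [z2 [y [Hz [Hy ->]]]]] u1 u2 Hu.
have H := IH _ Hz _ _ Hu.
have := ins_insert (u1 := u1 ++ z1) (u2 := z2 ++ u2) _ Hy.
rewrite -!catA in H *; apply; exact: H.
Qed.

Lemma ins_comp u1 u2 v : ins_star P (u1 ++ u2) -> ins_star P v ->
  ins_star P (u1 ++ v ++ u2).
Proof. by move=> Hu [n Hn]; exact: ins_comp_n Hn _ _ Hu. Qed.

Lemma ins_rot1_n n w : iter_ins P n w -> ins_star P (rot 1 w).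
Proof.
elim: n w => [|n IH] w /=; first by move=> ->; exact: ins_nil.
move=> [z1 [z2 [y [Hz [Hy ->]]]]].
case: z1 Hz => [|c z1'] Hz /=.
  case: y Hy => [|c y'] Hy; first by move: (Yne Hy).
  rewrite cat_cons rot1_cons -cats1 -catA.
  apply: ins_comp; last by exists n.
  rewrite cats1 -rot1_cons; apply: ins_Y; apply: (Ycc Hy).
  by apply/conjbP; exists 1 => //.
have := IH _ Hz; rewrite cat_cons rot1_cons -cats1 -catA => H.
rewrite rot1_cons -cats1 -!catA; exact: ins_insert.
Qed.

Lemma ins_rot i w : i <= size w -> ins_star P w -> ins_star P (rot i w).
Proof.
move=> Hi Hw; elim: i Hi => [|i IH] Hi; first by rewrite rot0.
rewrite rotS //; have [n Hn] := IH (ltnW Hi); exact: ins_rot1_n Hn.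
Qed.

Lemma ins_conj w w' : conjb w w' -> ins_star P w -> ins_star P w'.
Proof. by move/conjbP=> [i Hi ->]; exact: ins_rot. Qed.

Lemma flat_step x a z b y : flatL P (Rflat A) (x ++ a :: y) ->
  flatL P (Rflat A) (rcons z b) -> flatL P (Rflat A) (x ++ a :: z ++ b :: y).
Proof.
move=> H1 H2.
have Hr : ([:: a], [::], [::], [:: b]) \in Rflat A.
  by apply/mapP; exists (a, b); rewrite ?mem_enum.
apply: (flatL_step (r := ([:: a], [::], [::], [:: b])) (x:=x) (y:=y) (z:=z)) => //.
by rewrite /f_gamma /f_delta /= cats1.
Qed.

Lemma flat_ins w : flatL P (Rflat A) w <-> ins_star P w /\ w <> [::].
Proof.
split.
  elim=> [u Hu|r x y z Hr _ [H1 _] _ [H2 _]].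
    by split; [exact: ins_Y | move=> E; move: (Yne Hu); rewrite E].
  case/mapP: Hr => [[a b] _ Er]; subst r => /=.
  split; last by move/(congr1 size); rewrite size_cat /= addnS.
  move: H1 H2 => /= H1 H2.
  have := ins_comp (u1 := x ++ [:: a]) (u2 := y) (v := z ++ [:: b]).
  by rewrite -!catA /= => K; apply: K.
move=> [[n Hn] Hne]; elim: n w Hn Hne => [|n IH] w /=; first by move=> ->.
move=> [z1 [z2 [y [Hz [Hy ->]]]]] Hne.
have Hr a b : ([:: a], [::], [::], [:: b]) \in Rflat A.
  by apply/mapP; exists (a, b); rewrite ?mem_enum.
case: (lastP y) Hy => [|y0 b] Hy; first by move: (Yne Hy).
case: (lastP z1) Hz => [|x a] Hz.
  case: (lastP z2) Hz => [|z c] Hz; first by rewrite /= cats0; apply: flatL_init.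
  have := flat_step (x := y0) (a := b) (z := z) (b := c) (y := [::]).
  rewrite /= -!cats1 -!catA /= => K; apply: K.
    by apply: flatL_init; rewrite -cats1 in Hy.
  rewrite cats1; apply: IH; first exact: Hz.
  by move/(congr1 size); rewrite size_rcons.
rewrite cat_rcons cat_rcons; apply: flat_step.
  apply: IH; first by rewrite -cat_rcons.
  by move/(congr1 size); rewrite size_cat /= addnS.
exact: flatL_init.
Qed.

Variable I : seq (circ A).
Hypothesis HI : forall c, c \in I <-> exists2 y, y \in Y & c = cw y.

Lemma circ_ins c : circ13 I c -> forall w, cw w = c ->
  ins_star P w /\ w <> [::].
Proof.
elim=> [c' Hc|x y a b _ IH1 _ IH2] w Hw.
  have [y Hy E] := (HI c').1 Hc.
  rewrite E in Hw; have Hc' := cw_eq_conj (esym Hw).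
  have Hw' := Ycc Hy Hc'.
  split; first exact: ins_Y.
  by move=> E'; move: (Yne Hw'); rewrite E'.
have [H1 _] := IH1 _ erefl; have [H2 _] := IH2 _ erefl.
have Hc := cw_eq_conj (esym Hw).
split.
  apply: ins_conj Hc _.
  have := ins_comp (u1 := rcons x a) (u2 := [::]) (v := rcons y b).
  rewrite cats0 => K; have := K H1 H2; by rewrite cats0 cat_rcons -cats1.
move=> E; have := conjb_size Hc; rewrite E size_cat /=; by rewrite addnS.
Qed.

Lemma ins_circ w : ins_star P w -> w <> [::] -> circ13 I (cw w).
Proof.
move=> [n Hn]; elim: n w Hn => [|n IH] w /=; first by move=> ->.
move=> [z1 [z2 [y [Hz [Hy ->]]]]] Hne.
have Hyc : circ13 I (cw y) by apply: circ13_init; apply/HI; exists y.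
case E: (z1 ++ z2) Hz => [|d s] Hz.
  by move: E; case: z1 {Hz Hne} => [|? ?] //=; case: z2 => [|? ?] //= _; rewrite cats0.
have H12 : circ13 I (cw (z1 ++ z2)) by apply: IH => //; rewrite E.
have C1 : conjb (z1 ++ z2) (z2 ++ z1).
  by apply/conjbP; exists (size z1); rewrite ?size_cat ?leq_addr // rot_size_cat.
have C2 : conjb (z1 ++ y ++ z2) ((z2 ++ z1) ++ y).
  apply/conjbP; exists (size z1 + size y); first by rewrite !size_cat addnA leq_addr.
  by rewrite -size_cat catA rot_size_cat catA.
rewrite (cw_conj C2).
case: (lastP (z2 ++ z1)) (C1) => [|x a] C1'.
  by move: (conjb_size C1'); rewrite E.
case: (lastP y) Hyc Hy => [|y0 b] Hyc Hy; first by move: (Yne Hy).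
rewrite cat_rcons -cats1.
apply: circ13_step => //.
by rewrite -(cw_conj C1').
Qed.

End Proof.

Theorem theorem11p6 (A : finType) (L : circ A -> Prop) :
  let cond1 :=
    exists I : seq (circ A),
      (forall c, c \in I -> val c != [::]) /\
      (forall c, L c <-> circ13 I c) in
  let cond2 :=
    exists Y : seq (seq A),
      (forall w, w \in Y -> w != [::]) /\ conj_closed Y /\
      (forall w, flatL (fun u => u \in Y) (Rflat A) w <-> Lin L w) in
  let cond3 :=
    exists Y : seq (seq A),
      (forall w, w \in Y -> w != [::]) /\ conj_closed Y /\
      (forall w, Lin L w <-> (ins_star (fun u => u \in Y) w /\ w <> [::])) in
  (cond1 <-> cond2) /\ (cond2 <-> cond3).
Proof.
move=> c1 c2 c3.
have E23 : c2 <-> c3.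
  split=> [[Y [Hne [Hcc H]]]|[Y [Hne [Hcc H]]]]; exists Y; do 2 (split => //);
    move=> w; have := flat_ins Hne w; have := H w; tauto.
suff E13 : c1 <-> c3 by move: E13 E23; clear; tauto.
split.
  move=> [I [Hne H]].
  pose Y := flatten [seq [seq rot i (val c) | i <- iota 0 (size (val c)).+1] | c <- I].
  have HY w : w \in Y <-> exists2 c, c \in I & conjb (val c) w.
    split.
      move/flattenP=> [s /mapP [c Hc ->] /mapP [i Hi ->]].
      exists c => //; apply/conjbP; exists i => //.
      by move: Hi; rewrite mem_iota add0n ltnS.
    move=> [c Hc /conjbP [i Hi ->]]; apply/flattenP.
    exists [seq rot i (val c) | i <- iota 0 (size (val c)).+1]; first by apply/mapP; exists c.
    by apply/mapP; exists i => //; rewrite mem_iota add0n ltnS.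
  have Yne w : w \in Y -> w != [::].
    move/HY=> [c Hc Hcw]; move: (Hne c Hc); rewrite -!size_eq0 (conjb_size Hcw) //.
  have Ycc : conj_closed Y.
    move=> x y /HY [c Hc Hcx] Hxy; apply/HY; exists c => //; exact: conjb_trans Hxy.
  have HI c : c \in I <-> exists2 y, y \in Y & c = cw y.
    split.
      by move=> Hc; exists (val c); [apply/HY; exists c => //; exact: conjb_refl | rewrite cw_val].
    move=> [y /HY [c' Hc' Hcy] ->].
    by rewrite -(cw_conj Hcy) cw_val.
  exists Y; do 2 (split => //); move=> w; rewrite /Lin; have [HL1 HL2] := H (cw w); split.
    by move/HL1/(circ_ins Yne Ycc HI); apply.
  by move=> [H1 H2]; apply: HL2; exact: (ins_circ Yne HI).
move=> [Y [Yne [Ycc H]]].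
exists [seq cw y | y <- Y].
have HI c : c \in [seq cw y | y <- Y] <-> exists2 y, y \in Y & c = cw y.
  by split=> [/mapP|[y Hy ->]]; [ | apply/mapP; exists y].
split.
  move=> c /mapP [y Hy ->] /=.
  have := conjb_size (conjb_crep y); rewrite -!size_eq0 => ->.
  by rewrite size_eq0; exact: Yne.
move=> c; rewrite -{1}(cw_val c); split.
  by move/H=> [H1 H2]; rewrite -(cw_val c); exact: (ins_circ Yne HI).
move=> Hc; apply/H; apply: (circ_ins Yne Ycc HI Hc); exact: cw_val.
Qed.
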